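(* Let $G$ be an unweighted graph (loops allowed). Let $F$ be a bipartite graph and let $\mathcal{H}$ be the class of all graphs that are cross-bipartite swapping in $G$. Then every $\mathcal{H}$-blow-up $H$ of $F$ is bipartite swapping in $G$, i.e. $\hom(H,G)^2\le\hom(H\times K_2,G)$.
   Context: $\hom(H,G)$ is the number of homomorphisms from $H$ to $G$. The tensor product $H\times K_2$ has vertex set $V(H)\times\{1,2\}$, with $(u,i)$ adjacent to $(v,j)$ iff $uv\in E(H)$ and $i\ne j$; its canonical bipartition is $(V(H)\times\{1\})\sqcup(V(H)\times\{2\})$. For $A,B\subseteq V(G)$, $\hom_{\mathrm b}(H\times K_2,G[A,B])$ is the number of homomorphisms $\phi:H\times K_2\to G$ with $\phi(V(H)\times\{1\})\subseteq A$ and $\phi(V(H)\times\{2\})\subseteq B$. A graph $H$ is cross-bipartite swapping in $G$ if for all $A,B\subseteq V(G)$, $\hom(H,G[A])\hom(H,G[B])\le\hom_{\mathrm b}(H\times K_2,G[A,B])$, where $G[A]$ is the induced subgraph. For a class $\mathcal{H}$ and a graph $F$ on vertices $v_1,\dots,v_k$, an $\mathcal{H}$-blow-up of $F$ is obtained by choosing $H_1,\dots,H_k\in\mathcal{H}$, taking their disjoint union, and adding all edges between $V(H_i)$ and $V(H_j)$ whenever $v_iv_j\in E(F)$. *)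

(* Defs.v *)
From mathcomp Require Import all_boot.
Set Implicit Arguments. Unset Strict Implicit. Unset Printing Implicit Defensive.

(* Graphs are symmetric relations on finite types.  The target graph G may
   have loops; the graphs H, F (and the H_i) are simple: symmetric and
   irreflexive. *)

Definition hom (VH VG : finType) (H : rel VH) (G : rel VG) : nat :=
  #|[pred f : {ffun VH -> VG} | [forall u, forall v, H u v ==> G (f u) (f v)]]|.

(* hom(H, G[A]): homomorphisms H -> G[A] (induced subgraph on A) are exactly
   the homomorphisms H -> G whose image lies in A. *)
Definition hom_ind (VH VG : finType) (H : rel VH) (G : rel VG) (A : {set VG}) : nat :=
  #|[pred f : {ffun VH -> VG} | [forall u, f u \in A] &&
      [forall u, forall v, H u v ==> G (f u) (f v)]]|.

(* Tensor product H x K_2; vertex (u, true) is (u,1), (u, false) is (u,2). *)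
Definition tensorK2 (VH : finType) (H : rel VH) : rel (VH * bool)%type :=
  fun x y => H x.1 y.1 && (x.2 != y.2).

Definition hom_b (VH VG : finType) (H : rel VH) (G : rel VG) (A B : {set VG}) : nat :=
  #|[pred f : {ffun (VH * bool)%type -> VG} |
      [forall u, f (u, true) \in A] && [forall u, f (u, false) \in B] &&
      [forall x, forall y, tensorK2 H x y ==> G (f x) (f y)]]|.

Definition cross_bipartite_swapping (VH VG : finType) (H : rel VH) (G : rel VG) : Prop :=
  forall A B : {set VG}, hom_ind H G A * hom_ind H G B <= hom_b H G A B.

Definition bipartite_swapping (VH VG : finType) (H : rel VH) (G : rel VG) : Prop :=
  hom H G ^ 2 <= hom (tensorK2 H) G.

Definition bipartite (V : finType) (F : rel V) : Prop :=
  exists c : V -> bool, forall u v, F u v -> c u != c v.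

Definition blowup (VF : finType) (F : rel VF) (VH : VF -> finType)
    (Hs : forall i, rel (VH i)) : rel {i : VF & VH i} :=
  fun x y => ((tag x == tag y) && Hs (tag x) (tagged x) (tagged_as x y))
             || F (tag x) (tag y).

(* Main.v *)
Require Import Defs.
From mathcomp Require Import all_boot.
Set Implicit Arguments. Unset Strict Implicit. Unset Printing Implicit Defensive.

Section S.
Variables (VG : finType) (G : rel VG) (symG : symmetric G)
  (VF : finType) (F : rel VF) (symF : symmetric F) (irrF : irreflexive F)
  (VH : VF -> finType) (Hs : forall i, rel (VH i)).

Local Notation V := {i : VF & VH i}.
Local Notation T := (V * bool)%type.

Definition Rel (m : VF -> bool) : rel T := fun x y =>
  blowup F Hs x.1 y.1 &&
  (if (tag x.1 == tag y.1) && m (tag x.1) then x.2 != y.2 else x.2 == y.2).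

Definition homP (R : rel T) (f : {ffun T -> VG}) :=
  [forall u, forall v, R u v ==> G (f u) (f v)].

Lemma homPP (R : rel T) (f : {ffun T -> VG}) : reflect (forall u v, R u v -> G (f u) (f v)) (homP R f).
Proof.
apply: (iffP forallP) => H u.
  move=> v; move/forallP: (H u) => /(_ v) /implyP; exact.
apply/forallP => v; apply/implyP; exact: H.
Qed.

Lemma RelE_in m i (a b : VH i) s t :
  Rel m (Tagged VH a, s) (Tagged VH b, t) = Hs a b && (if m i then s != t else s == t).
Proof. by rewrite /Rel /blowup /= eqxx tagged_asE irrF orbF. Qed.

Lemma RelE_out m (x y : V) s t : tag x != tag y ->
  Rel m (x, s) (y, t) = F (tag x) (tag y) && (s == t).
Proof. by move=> ne; rewrite /Rel /blowup /= (negbTE ne). Qed.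

Definition clear i (v0 : VG) (f : {ffun T -> VG}) : {ffun T -> VG} :=
  [ffun y => if tag y.1 == i then v0 else f y].
Definition inside i (f : {ffun T -> VG}) : {ffun (VH i * bool) -> VG} :=
  [ffun p => f (Tagged VH p.1, p.2)].
Definition merge i (f0 : {ffun T -> VG}) (psi : {ffun (VH i * bool) -> VG}) :
  {ffun T -> VG} :=
  [ffun y => match tag y.1 =P i with
             | ReflectT e => psi (etagged e, y.2) | ReflectF _ => f0 y end].
Arguments merge i f0 psi : clear implicits.

Lemma mergeE_in i f0 psi (a : VH i) s : merge i f0 psi (Tagged VH a, s) = psi (a, s).
Proof.
rewrite ffunE; case: (tag (Tagged VH a, s).1 =P i) => [e|//].
by rewrite (eq_irrelevance e erefl).
Qed.

Lemma mergeE_out i f0 psi (y : T) : tag y.1 != i -> merge i f0 psi y = f0 y.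
Proof. by move=> ne; rewrite ffunE; case: (tag y.1 =P i) => // e; rewrite e eqxx in ne. Qed.

Lemma merge_clear_inside i v0 f : merge i (clear i v0 f) (inside i f) = f.
Proof.
apply/ffunP => -[x s]; rewrite ffunE; case: (tag (x, s).1 =P i) => [e|ne] /=.
  by rewrite ffunE /= etaggedK.
by rewrite ffunE /= (introF eqP ne).
Qed.

Lemma clear_merge i v0 f0 psi : clear i v0 f0 = f0 -> clear i v0 (merge i f0 psi) = f0.
Proof.
move=> C; apply/ffunP => y; rewrite ffunE.
case: ifP => [e|ne]; last by rewrite mergeE_out ?ne.
by rewrite -C ffunE e.
Qed.

Lemma inside_merge i f0 psi : inside i (merge i f0 psi) = psi.
Proof. by apply/ffunP => -[a s]; rewrite ffunE mergeE_in. Qed.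

Lemma clear_clear i v0 f : clear i v0 (clear i v0 f) = clear i v0 f.
Proof. by apply/ffunP => y; rewrite !ffunE; case: (tag y.1 == i). Qed.


Lemma decomp i v0 (P : pred {ffun T -> VG}) :
  #|[pred f | P f]| =
  \sum_(f0 | clear i v0 f0 == f0) #|[pred psi | P (merge i f0 psi)]|.
Proof.
rewrite -sum1_card (partition_big (clear i v0) (fun f0 => clear i v0 f0 == f0)).
  apply: eq_bigr => f0 /eqP C.
  rewrite (reindex_onto (merge i f0) (inside i)); last first.
    by move=> f /andP[_ /eqP <-]; rewrite merge_clear_inside.
  rewrite -sum1_card; apply: eq_bigl => psi.
  by rewrite clear_merge // inside_merge !eqxx !andbT inE.
by move=> f _; rewrite clear_clear.
Qed.

Definition Outb m i (f0 : {ffun T -> VG}) :=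
  [forall x, forall y, (tag x.1 != i) ==> (tag y.1 != i) ==> Rel m x y ==> G (f0 x) (f0 y)].

Definition Aset i (f0 : {ffun T -> VG}) (s : bool) : {set VG} :=
  [set v | [forall y : T, (tag y.1 != i) ==> F i (tag y.1) ==> (y.2 == s) ==>
             G v (f0 y) && G (f0 y) v]].

Lemma homP_merge m i f0 psi :
  homP (Rel m) (merge i f0 psi) <->
  [/\ Outb m i f0, (forall a s, psi (a, s) \in Aset i f0 s) &
      (forall a b s t, Hs a b -> (if m i then s != t else s == t) ->
                       G (psi (a, s)) (psi (b, t)))].
Proof.
split.
  move/homPP => H; split.
  - apply/forallP => x; apply/forallP => y; apply/implyP => nx; apply/implyP => ny.
    apply/implyP => R; have := H x y R; by rewrite !mergeE_out.
  - move=> a s; rewrite inE; apply/forallP => -[y t]; apply/implyP => ny.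
    apply/implyP => Fy; apply/implyP => /eqP /= ts; subst t.
    have ne : tag (Tagged VH a) != tag y by rewrite eq_sym.
    apply/andP; split.
      have := H (Tagged VH a, s) (y, s); rewrite mergeE_in mergeE_out //.
      by rewrite RelE_out // Fy eqxx => /(_ isT).
    have := H (y, s) (Tagged VH a, s); rewrite mergeE_in mergeE_out //.
    by rewrite RelE_out 1?eq_sym // symF Fy eqxx => /(_ isT).
  - move=> a b s t Hab Hm; have := H (Tagged VH a, s) (Tagged VH b, t).
    by rewrite !mergeE_in RelE_in Hab Hm => /(_ isT).
case=> /forallP Ho HA Hin; apply/homPP => -[[j a] s] [[k b] t].
have [eji|nji] := eqVneq j i; have [eki|nki] := eqVneq k i.
- subst j k; rewrite !mergeE_in RelE_in => /andP[]; exact: Hin.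
- subst j; rewrite mergeE_in mergeE_out // RelE_out /=; last by rewrite eq_sym.
  move=> /andP[Fik /eqP st].
  subst t; have := HA a s; rewrite inE => /forallP /(_ (Tagged VH b, s)) /=.
  by rewrite nki Fik eqxx /= => /andP[].
- subst k; rewrite mergeE_in mergeE_out // RelE_out //=.
  move=> /andP[Fji /eqP st].
  subst t; have := HA b s; rewrite inE => /forallP /(_ (Tagged VH a, s)) /=.
  by rewrite nji symF Fji eqxx /= => /andP[].
- rewrite !mergeE_out // => R.
  by move/forallP: (Ho (Tagged VH a, s)) => /(_ (Tagged VH b, t)) /=; rewrite nji nki R.
Qed.


Lemma count0 m i f0 : ~~ Outb m i f0 ->
  #|[pred psi | homP (Rel m) (merge i f0 psi)]| = 0.
Proof.
move=> nO; apply: eq_card0 => psi; rewrite inE.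
by apply/negP => /homP_merge [O _ _]; rewrite O in nO.
Qed.

Lemma count_le m i f0 : m i = false ->
  #|[pred psi | homP (Rel m) (merge i f0 psi)]| <=
  hom_ind (@Hs i) G (Aset i f0 true) * hom_ind (@Hs i) G (Aset i f0 false).
Proof.
move=> mi.
pose g (psi : {ffun (VH i * bool) -> VG}) :=
  ([ffun u => psi (u, true)] : {ffun VH i -> VG},
   [ffun u => psi (u, false)] : {ffun VH i -> VG}).
have ginj : injective g.
  move=> p1 p2 [E1 E2]; apply/ffunP => -[u []].
    by have := congr1 (fun h : {ffun VH i -> VG} => h u) E1; rewrite !ffunE.
  by have := congr1 (fun h : {ffun VH i -> VG} => h u) E2; rewrite !ffunE.
set S := [pred psi | _].
pose Pt := [set f : {ffun VH i -> VG} | [forall u, f u \in Aset i f0 true] &&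
      [forall u, forall v, Hs u v ==> G (f u) (f v)]].
pose Pf := [set f : {ffun VH i -> VG} | [forall u, f u \in Aset i f0 false] &&
      [forall u, forall v, Hs u v ==> G (f u) (f v)]].
have -> : hom_ind (@Hs i) G (Aset i f0 true) * hom_ind (@Hs i) G (Aset i f0 false)
          = #|setX Pt Pf|.
  by rewrite cardsX /hom_ind !cardsE.
rewrite -(card_in_imset (f := g) (D := S)); last by move=> ? ? _ _; apply: ginj.
apply: subset_leq_card; apply/subsetP => p /imsetP [psi].
rewrite inE => /homP_merge [_ HA Hin] ->.
rewrite !inE; apply/andP; split; apply/andP; split.
- by apply/forallP => u; rewrite ffunE.
- apply/forallP => u; apply/forallP => v; apply/implyP => Huv; rewrite !ffunE.
  by apply: Hin; rewrite ?mi.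
- by apply/forallP => u; rewrite ffunE.
- apply/forallP => u; apply/forallP => v; apply/implyP => Huv; rewrite !ffunE.
  by apply: Hin; rewrite ?mi.
Qed.

Lemma count_ge m i f0 : m i = true -> Outb m i f0 ->
  hom_b (@Hs i) G (Aset i f0 true) (Aset i f0 false) <=
  #|[pred psi | homP (Rel m) (merge i f0 psi)]|.
Proof.
move=> mi O; apply: subset_leq_card; apply/subsetP => psi.
rewrite !inE => /andP[/andP[/forallP At /forallP Af] /forallP Ht].
apply/homP_merge; split => //.
  by move=> a []; [apply: At | apply: Af].
move=> a b s t Hab; rewrite mi => st.
by move/forallP: (Ht (a, s)) => /(_ (b, t)) /implyP; apply; rewrite /tensorK2 /= Hab st.
Qed.

Lemma Outb_eq m m' i f0 : (forall j, j != i -> m' j = m j) -> Outb m i f0 = Outb m' i f0.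
Proof.
move=> E; apply: eq_forallb => x; apply: eq_forallb => y.
case: (eqVneq (tag x.1) i) => //= nx; case: (eqVneq (tag y.1) i) => //= ny.
by rewrite /Rel E.
Qed.


Lemma homE (R : rel T) : hom R G = #|[pred f | homP R f]|.
Proof. by []. Qed.

Lemma swap1 m m' i : cross_bipartite_swapping (@Hs i) G ->
  m i = false -> m' i = true -> (forall j, j != i -> m' j = m j) ->
  hom (Rel m) G <= hom (Rel m') G.
Proof.
move=> swi mi mi' E.
case: (pickP (@predT VG)) => [v0 _|noV]; last first.
  apply: subset_leq_card; apply/subsetP => f _; rewrite inE.
  by apply/forallP => u; have := noV (f u).
rewrite !homE (decomp i v0) (decomp i v0); apply: leq_sum => f0 _.
case: (boolP (Outb m i f0)) => O; last by rewrite count0.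
apply: leq_trans (count_le f0 mi) _; apply: leq_trans (swi _ _) _.
by apply: count_ge => //; rewrite -(Outb_eq f0 E).
Qed.

Lemma Rel_ext m m' : m =1 m' -> hom (Rel m) G = hom (Rel m') G.
Proof.
move=> E; apply: eq_card => f; rewrite !inE.
by apply: eq_forallb => u; apply: eq_forallb => v; rewrite /Rel E.
Qed.

Lemma swap_all (sw : forall i, cross_bipartite_swapping (@Hs i) G) (s : seq VF) :
  hom (Rel (fun _ => false)) G <= hom (Rel (fun j => j \in s)) G.
Proof.
elim: s => [|i s IH]; first by rewrite (@Rel_ext _ (fun _ => false)).
case: (boolP (i \in s)) => ins.
  rewrite (@Rel_ext (fun j => j \in i :: s) (fun j => j \in s)) // => j.
  by rewrite in_cons; case: eqP => // ->.
apply: leq_trans IH (swap1 (sw i) _ _ _).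
- exact: negbTE.
- exact: mem_head.
- by move=> j nj; rewrite in_cons (negbTE nj).
Qed.

Lemma inj_le (aT rT : finType) (A : pred aT) (B : pred rT) (h : aT -> rT) :
  injective h -> (forall x, x \in A -> h x \in B) -> #|A| <= #|B|.
Proof.
move=> hi AB; rewrite -(card_in_imset (f := h) (D := A)); last by move=> ? ? _ _; apply: hi.
apply: subset_leq_card; apply/subsetP => y /imsetP [x Ax ->]; exact: AB.
Qed.

Lemma E0 : hom (blowup F Hs) G ^ 2 <= hom (Rel (fun _ => false)) G.
Proof.
set P := [set f : {ffun V -> VG} | [forall u, forall v, blowup F Hs u v ==> G (f u) (f v)]].
have -> : hom (blowup F Hs) G ^ 2 = #|setX P P| by rewrite cardsX /hom !cardsE.
pose h (p : {ffun V -> VG} * {ffun V -> VG}) : {ffun T -> VG} :=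
  [ffun z => if z.2 then p.1 z.1 else p.2 z.1].
apply: (@inj_le _ _ _ _ h).
  move=> [p1 p2] [q1 q2] E; congr pair; apply/ffunP => x.
    by have := congr1 (fun f : {ffun T -> VG} => f (x, true)) E; rewrite !ffunE.
  by have := congr1 (fun f : {ffun T -> VG} => f (x, false)) E; rewrite !ffunE.
move=> [p1 p2]; rewrite !inE /= => /andP [H1 H2]; apply/homPP => -[x s] [y t].
rewrite /Rel /= andbF => /andP [Bxy /eqP st]; subst t; rewrite !ffunE /=.
by case: s; [move/forallP: H1 | move/forallP: H2] => /(_ x) /forallP /(_ y) /implyP; apply.
Qed.

Lemma E1 (c : VF -> bool) : (forall u v, F u v -> c u != c v) ->
  hom (Rel (fun _ => true)) G <= hom (tensorK2 (blowup F Hs)) G.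
Proof.
move=> Hc.
pose sg (z : T) : T := (z.1, z.2 (+) c (tag z.1)).
have sgK : involutive sg by move=> [x s]; rewrite /sg /= addbK.
have key : forall a b, Rel (fun _ => true) (sg a) (sg b) = tensorK2 (blowup F Hs) a b.
  move=> [x s] [y t]; rewrite /Rel /tensorK2 /sg /= andbT.
  case B: (blowup F Hs x y) => //=.
  case: (eqVneq (tag x) (tag y)) => [->|ne].
    by case: s; case: t; case: (c (tag y)).
  move: B; rewrite /blowup (negbTE ne) /= => /Hc.
  by case: s; case: t; case: (c (tag x)); case: (c (tag y)).
apply: (@inj_le _ _ _ _ (fun f : {ffun T -> VG} => [ffun z => f (sg z)])).
  move=> f g E; apply/ffunP => y.
  by have := congr1 (fun h : {ffun T -> VG} => h (sg y)) E; rewrite !ffunE sgK.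
move=> f; rewrite !inE => /homPP H; apply/homPP => z w; rewrite -key !ffunE; exact: H.
Qed.

Lemma main_sec (sw : forall i, cross_bipartite_swapping (@Hs i) G) :
  bipartite F -> bipartite_swapping (blowup F Hs) G.
Proof.
case=> c Hc; rewrite /bipartite_swapping.
apply: leq_trans E0 _; apply: leq_trans (swap_all sw (enum VF)) _.
rewrite (@Rel_ext _ (fun _ => true)); first exact: E1 Hc.
by move=> j; rewrite mem_enum.
Qed.

End S.

Theorem theorem5p1 (VG : finType) (G : rel VG) (symG : symmetric G)
  (VF : finType) (F : rel VF) (symF : symmetric F) (irrF : irreflexive F)
  (bipF : bipartite F)
  (VH : VF -> finType) (Hs : forall i, rel (VH i))
  (symH : forall i, symmetric (Hs i)) (irrH : forall i, irreflexive (Hs i))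
  (swH : forall i, cross_bipartite_swapping (Hs i) G) :
  bipartite_swapping (blowup F Hs) G.
Proof. exact: main_sec. Qed.
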